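(* Let $(K,D,v)$ be a VD-field such that $(K,v)$ is spherically complete and the residue field $Kv$ is linearly $D$-closed. Let $f\in\mathcal{O}[X_0,X_1,\dots,X_n]$ and assume there is $b\in\mathcal{O}$ such that $$\gamma:=\min_{0\le i\le n} v\frac{\partial f}{\partial X_i}(b,Db,\dots,D^nb)<\infty\quad\text{and}\quad vf(b,Db,\dots,D^nb)>2\gamma.$$ Then there is $a\in K$ such that $f(a,Da,\dots,D^na)=0$ and $v(a-b)>\gamma$.
   Context: $(K,v)$ is a valued field with valuation ring $\mathcal{O}=\{y:vy\ge0\}$, valuation ideal $\mathcal{M}=\{y:vy>0\}$, residue field $Kv=\mathcal{O}/\mathcal{M}$, value group $vK$. $(K,v)$ is spherically complete if the ultrametric space $(K,u)$ with $u(a,b)=v(a-b)$ is spherically complete, i.e. every family of balls $\{x: v(x-c)\ge\alpha\}$ (or unions of such with a common point) totally ordered by inclusion has non-empty intersection. A VD-field is a valued field $(K,v)$ with an additive map $D:K\to K$ such that: (VDF1) $vDa\ge va$ for all $a\in K$; (VDF2) $vK=\{va\mid a\in K,\ vDa>va\}$; (VDF3) there is $e\in\mathcal{O}$ with $D(ab)=aDb+bDa+e(Da)(Db)$ for all $a,b\in K$. By (VDF1), $D$ induces an additive map on $Kv$, again denoted $D$, with $D(av)=(Da)v$ for $a\in\mathcal{O}$. $D^i$ denotes the $i$-th iterate ($D^0=\mathrm{id}$). $Kv$ is linearly $D$-closed if every operator $\sum_{i=0}^n c_iD^i$ with $c_i\in Kv$ is surjective on $Kv$. *)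

(* Defs.v *)
From mathcomp Require Import all_boot all_algebra.
From mathcomp Require Import mpoly.

Set Implicit Arguments.
Unset Strict Implicit.
Unset Printing Implicit Defensive.

Import GRing.Theory.
Local Open Scope ring_scope.

Definition is_oag (G : zmodType) (le : rel G) : Prop :=
  [/\ reflexive le, antisymmetric le, transitive le, total le
    & forall x y z : G, le x y -> le (x + z) (y + z)].

(* A (Krull) valuation v : K -> G, where v 0 = "infinity" is left implicit:
   v is only meaningful on nonzero elements; G is the value group vK
   (v is surjective from K^x onto G). *)
Definition is_valuation (K : fieldType) (G : zmodType) (le : rel G)
  (v : K -> G) : Prop :=
  [/\ is_oag le,
      forall x y : K, x != 0 -> y != 0 -> v (x * y) = v x + v y,
      forall x y : K, x != 0 -> y != 0 -> x + y != 0 ->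
         le (v x) (v (x + y)) \/ le (v y) (v (x + y))
    & forall g : G, exists2 x : K, x != 0 & v x = g].

Section ValuedField.
Variables (K : fieldType) (G : zmodType) (le : rel G) (v : K -> G).

Definition lt_ (a b : G) := (a != b) && le a b.

Definition vge (x : K) (g : G) : bool := (x == 0) || le g (v x).
Definition vgt (x : K) (g : G) : bool := (x == 0) || lt_ g (v x).
Definition vle (x y : K) : bool := (y == 0) || ((x != 0) && le (v x) (v y)).
Definition vlt (x y : K) : bool := (x != 0) && ((y == 0) || lt_ (v x) (v y)).

Definition vring (x : K) : bool := (x == 0) || le 0 (v x).
Definition videal (x : K) : bool := (x == 0) || lt_ 0 (v x).

(* Balls: {x : v(x - c) >= a} and unions of such balls having a common point,
   i.e. sets {x : x = c or v(x - c) \in L} with L a nonempty final segment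
   of G. *)
Definition ball (c : K) (L : pred G) : pred K :=
  fun x => (x == c) || L (v (x - c)).

Definition final_segment (L : pred G) : Prop :=
  (exists g, L g) /\ forall g h, L g -> le g h -> L h.

Definition spherically_complete : Prop :=
  forall (I : Type) (c : I -> K) (L : I -> pred G),
    (forall i, final_segment (L i)) ->
    (forall i j, {subset ball (c i) (L i) <= ball (c j) (L j)} \/
                 {subset ball (c j) (L j) <= ball (c i) (L i)}) ->
    exists x : K, forall i, ball (c i) (L i) x.

Definition is_VD (D : K -> K) : Prop :=
  [/\ forall x y, D (x + y) = D x + D y,
      forall a : K, vle a (D a),
      forall a : K, a != 0 -> exists b : K, [/\ b != 0, v b = v a & vlt b (D b)]
    & exists2 e : K, vring e &
        forall a b : K, D (a * b) = a * D b + b * D a + e * D a * D b].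

(* The residue field Kv = O/M is linearly D-closed: every nonzero operator
   sum_{i<=m} c_i D^i with c_i in Kv is surjective on Kv.  Written out on
   representatives: c_i in O, not all in M; for every y in O there is x in O
   with sum_i c_i D^i x - y in M. *)
Definition residue_linearly_D_closed (D : K -> K) : Prop :=
  forall (m : nat) (c : 'I_m.+1 -> K),
    (forall i, vring (c i)) -> (exists i, ~~ videal (c i)) ->
    forall y : K, vring y ->
      exists2 x : K, vring x &
        videal (\sum_(i < m.+1) c i * iter i D x - y).

End ValuedField.

Definition jet (K : fieldType) (D : K -> K) (n : nat) (a : K) : 'I_n.+1 -> K :=
  fun i => iter i D a.
Arguments jet {K} D n a.

(* Main.v *)
Require Import Defs.
From mathcomp Require Import all_boot all_algebra.
From mathcomp Require Import mpoly.
From Stdlib Require Import Classical.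
From mathcomp Require classical_sets.
From mathcomp Require Import ring.

Set Implicit Arguments.
Unset Strict Implicit.
Unset Printing Implicit Defensive.
Import GRing.Theory.
Local Open Scope ring_scope.

Section OAG.
Variables (G : zmodType) (le : rel G).
Hypothesis ho : is_oag le.

Lemma leR x : le x x. Proof. by case: ho. Qed.
Lemma leT x y z : le x y -> le y z -> le x z.
Proof. by case: ho => _ _ t _ _; exact: t. Qed.
Lemma leA x y : le x y -> le y x -> x = y.
Proof. by case: ho => _ a _ _ _ h1 h2; apply: a; rewrite h1 h2. Qed.
Lemma leTot x y : le x y || le y x. Proof. by case: ho => _ _ _ t _; exact: t. Qed.
Lemma leDr x y z : le x y -> le (x + z) (y + z). Proof. by case: ho => _ _ _ _ h; exact: h. Qed.
Lemma leDl x y z : le x y -> le (z + x) (z + y).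
Proof. by move=> h; rewrite ![z + _]addrC; exact: leDr. Qed.
Lemma leD a b c d : le a b -> le c d -> le (a + c) (b + d).
Proof. by move=> h1 h2; apply: (leT (leDr c h1)); exact: leDl. Qed.
Lemma leDr_inv x y z : le (x + z) (y + z) -> le x y.
Proof. by move=> h; have := leDr (- z) h; rewrite !addrK. Qed.

Lemma ltE a b : lt_ le a b = (a != b) && le a b. Proof. by []. Qed.
Lemma lt_le a b : lt_ le a b -> le a b. Proof. by case/andP. Qed.
Lemma lt_irr a : lt_ le a a = false. Proof. by rewrite /lt_ eqxx. Qed.
Lemma le_lt_F a b : le a b -> lt_ le b a -> False.
Proof. by move=> h /andP[ne h2]; move/negP: ne; apply; apply/eqP/leA. Qed.
Lemma lt_leT a b c : lt_ le a b -> le b c -> lt_ le a c.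
Proof.
move=> h1 h2; apply/andP; split; last exact: leT (lt_le h1) h2.
by apply/negP => /eqP E; subst c; exact: le_lt_F h2 h1.
Qed.
Lemma le_ltT a b c : le a b -> lt_ le b c -> lt_ le a c.
Proof.
move=> h1 h2; apply/andP; split; last exact: leT h1 (lt_le h2).
by apply/negP => /eqP E; subst c; exact: le_lt_F h1 h2.
Qed.
Lemma ltDr a b z : lt_ le a b -> lt_ le (a + z) (b + z).
Proof.
move=> /andP[ne h]; apply/andP; split; last exact: leDr.
by apply: contra ne => /eqP /addIr ->.
Qed.
Lemma ltD a b c d : lt_ le a b -> le c d -> lt_ le (a + c) (b + d).
Proof. by move=> h1 h2; apply: (lt_leT (ltDr c h1)); exact: leDl. Qed.
Lemma leltD a b c d : le a b -> lt_ le c d -> lt_ le (a + c) (b + d).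
Proof. by move=> h1 h2; rewrite (addrC a) (addrC b); exact: ltD. Qed.
Lemma le_or_lt a b : le a b \/ lt_ le b a.
Proof.
case: (eqVneq a b) => [->|ne]; first by left; exact: leR.
by case/orP: (leTot a b) => h; [left|right; rewrite /lt_ eq_sym ne].
Qed.
Lemma le0_double (g : G) : le 0 g -> le g (g + g).
Proof. by move=> h; have := leDr g h; rewrite add0r. Qed.
Lemma double0 (g : G) : g + g = 0 -> g = 0.
Proof.
move=> E; case/orP: (leTot 0 g) => h.
  by apply: leA => //; have := leDr g h; rewrite add0r E.
by apply: leA => //; have := leDr g h; rewrite add0r E.
Qed.
End OAG.

Section Val.
Variables (K : fieldType) (G : zmodType) (le : rel G) (v : K -> G).
Hypothesis hv : is_valuation le v.

Lemma hvO : is_oag le. Proof. by case: hv. Qed.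
Let ho := hvO.
Lemma vM x y : x != 0 -> y != 0 -> v (x * y) = v x + v y.
Proof. by case: hv => _ h _ _; exact: h. Qed.
Lemma vU x y : x != 0 -> y != 0 -> x + y != 0 ->
  le (v x) (v (x + y)) \/ le (v y) (v (x + y)).
Proof. by case: hv => _ _ h _; exact: h. Qed.
Lemma vsurj g : exists2 x : K, x != 0 & v x = g.
Proof. by case: hv => _ _ _ h; exact: h. Qed.
Lemma v1 : v 1 = 0.
Proof.
have := vM (oner_neq0 K) (oner_neq0 K); rewrite mulr1 => E.
by apply/eqP; rewrite -(addrI (v 1) (etrans (addr0 _) E)) eqxx.
Qed.
Lemma vN x : v (- x) = v x.
Proof.
have hN1 : v (-1) = 0.
  apply: (double0 ho); rewrite -vM ?oppr_eq0 ?oner_eq0 //.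
  by rewrite mulrNN mulr1 v1.
case: (eqVneq x 0) => [->|nx]; first by rewrite oppr0.
by rewrite -mulN1r vM ?oppr_eq0 ?oner_eq0 // hN1 add0r.
Qed.
Lemma vV x : x != 0 -> v x^-1 = - v x.
Proof.
move=> nx; have := vM nx (invr_neq0 nx); rewrite mulfV // v1 => E.
by apply: (addrI (v x)); rewrite -E subrr.
Qed.

Local Notation ge := (vge le v).
Local Notation gt := (vgt le v).
Local Notation lt := (lt_ le).

Lemma vgeE x g : x != 0 -> ge x g = le g (v x).
Proof. by rewrite /vge => /negbTE ->. Qed.
Lemma vgtE x g : x != 0 -> gt x g = lt g (v x).
Proof. by rewrite /vgt => /negbTE ->. Qed.
Lemma vge0 g : ge 0 g. Proof. by rewrite /vge eqxx. Qed.
Lemma vgt0 g : gt 0 g. Proof. by rewrite /vgt eqxx. Qed.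
Lemma vge_v x : ge x (v x).
Proof. by case: (eqVneq x 0) => [->|nx]; rewrite ?vge0 // vgeE // leR. Qed.

Lemma vgeD x y g : ge x g -> ge y g -> ge (x + y) g.
Proof.
case: (eqVneq x 0) => [->|nx]; first by rewrite add0r.
case: (eqVneq y 0) => [->|ny]; first by rewrite addr0.
case: (eqVneq (x + y) 0) => [->|nxy]; first by rewrite vge0.
rewrite !vgeE // => hx hy.
by case: (vU nx ny nxy) => h; [exact (leT ho hx h)|exact (leT ho hy h)].
Qed.
Lemma vgtD x y g : gt x g -> gt y g -> gt (x + y) g.
Proof.
case: (eqVneq x 0) => [->|nx]; first by rewrite add0r.
case: (eqVneq y 0) => [->|ny]; first by rewrite addr0.
case: (eqVneq (x + y) 0) => [->|nxy]; first by rewrite vgt0.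
rewrite !vgtE // => hx hy.
by case: (vU nx ny nxy) => h; [exact (lt_leT ho hx h)|exact (lt_leT ho hy h)].
Qed.
Lemma vgeN x g : ge (- x) g = ge x g.
Proof. by rewrite /vge vN oppr_eq0. Qed.
Lemma vgtN x g : gt (- x) g = gt x g.
Proof. by rewrite /vgt vN oppr_eq0. Qed.
Lemma vgeB x y g : ge x g -> ge y g -> ge (x - y) g.
Proof. by move=> h1 h2; apply: vgeD => //; rewrite vgeN. Qed.
Lemma vgtB x y g : gt x g -> gt y g -> gt (x - y) g.
Proof. by move=> h1 h2; apply: vgtD => //; rewrite vgtN. Qed.
Lemma vgt_ge x g : gt x g -> ge x g.
Proof. by rewrite /vgt /vge => /orP[->//|/lt_le ->]; rewrite orbT. Qed.
Lemma vge_le x a b : le a b -> ge x b -> ge x a.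
Proof. by move=> h; rewrite /vge => /orP[->//|h2]; rewrite (leT ho h h2) orbT. Qed.
Lemma vgt_le x a b : le a b -> gt x b -> gt x a.
Proof. by move=> h; rewrite /vgt => /orP[->//|h2]; rewrite (le_ltT ho h h2) orbT. Qed.
Lemma vge_lt x a b : lt a b -> ge x b -> gt x a.
Proof. by move=> h; rewrite /vge /vgt => /orP[->//|h2]; rewrite (lt_leT ho h h2) orbT. Qed.

Lemma vgeM x y a b : ge x a -> ge y b -> ge (x * y) (a + b).
Proof.
case: (eqVneq x 0) => [->|nx]; first by move=> *; rewrite mul0r vge0.
case: (eqVneq y 0) => [->|ny]; first by move=> *; rewrite mulr0 vge0.
by rewrite !vgeE ?mulf_neq0 // vM // => h1 h2; exact (leD ho h1 h2).
Qed.
Lemma vgtM_ge x y a b : gt x a -> ge y b -> gt (x * y) (a + b).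
Proof.
case: (eqVneq x 0) => [->|nx]; first by move=> *; rewrite mul0r vgt0.
case: (eqVneq y 0) => [->|ny]; first by move=> *; rewrite mulr0 vgt0.
by rewrite vgtE // vgeE // vgtE ?mulf_neq0 // vM // => h1 h2; exact (ltD ho h1 h2).
Qed.
Lemma vgeM_gt x y a b : ge x a -> gt y b -> gt (x * y) (a + b).
Proof. by move=> h1 h2; rewrite mulrC addrC; exact: vgtM_ge. Qed.
Lemma vgtM x y a b : gt x a -> gt y b -> gt (x * y) (a + b).
Proof. by move=> h1 h2; exact (vgtM_ge h1 (vgt_ge h2)). Qed.

Lemma vge_sum (I : eqType) (r : seq I) (F : I -> K) g :
  (forall i, ge (F i) g) -> ge (\sum_(i <- r) F i) g.
Proof. by move=> h; apply: (big_ind (fun z => ge z g)) => //; [exact: vge0|move=> ? ?; exact: vgeD]. Qed.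
Lemma vgt_sum (I : eqType) (r : seq I) (F : I -> K) g :
  (forall i, gt (F i) g) -> gt (\sum_(i <- r) F i) g.
Proof. by move=> h; apply: (big_ind (fun z => gt z g)) => //; [exact: vgt0|move=> ? ?; exact: vgtD]. Qed.

Lemma vstrict x u : x != 0 -> gt u (v x) -> x + u != 0 /\ v (x + u) = v x.
Proof.
move=> nx hu.
have nxu : x + u != 0.
  apply/negP => /eqP E; have : u = - x by apply/eqP; rewrite -subr_eq0 opprK addrC E.
  by move=> U; move: hu; rewrite U vgtN vgtE // lt_irr.
split => //.
have h1 : ge (x + u) (v x) := vgeD (vge_v x) (vgt_ge hu).
rewrite vgeE // in h1.
case: (eqVneq u 0) => [->|nu]; first by rewrite addr0.
rewrite vgtE // in hu.
case: (le_or_lt ho (v (x + u)) (v u)) => hc.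
  have h2 : ge x (v (x + u)).
    rewrite -{1}(addrK u x); apply: vgeB; first exact: vge_v.
    by rewrite vgeE.
  rewrite vgeE // in h2.
  exact (leA ho h2 h1).
exfalso.
have h2 : ge x (v u).
  rewrite -{1}(addrK u x); apply: vgeB; last exact: vge_v.
  by rewrite vgeE // (lt_le hc).
rewrite vgeE // in h2.
exact: (le_lt_F ho h2 hu).
Qed.

End Val.

Section Taylor.
Variables (K : fieldType) (O I1 I2 : K -> Prop).
Hypotheses (O0 : O 0) (O1 : O 1) (OD : forall a b, O a -> O b -> O (a + b))
  (ON : forall a, O a -> O (- a)) (OM : forall a b, O a -> O b -> O (a * b)).
Hypotheses (I10 : I1 0) (I1D : forall a b, I1 a -> I1 b -> I1 (a + b))
  (I1N : forall a, I1 a -> I1 (- a)) (I1M : forall a b, O a -> I1 b -> I1 (a * b)).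
Hypotheses (I20 : I2 0) (I2D : forall a b, I2 a -> I2 b -> I2 (a + b))
  (I2N : forall a, I2 a -> I2 (- a)) (I2M : forall a b, O a -> I2 b -> I2 (a * b)).
Hypotheses (I12 : forall a, I2 a -> I1 a) (I1O : forall a, I1 a -> O a)
  (I11 : forall a b, I1 a -> I1 b -> I2 (a * b)).
Variables (N : nat) (x h : 'I_N -> K).
Hypotheses (Hx : forall i, O (x i)) (Hh : forall i, I1 (h i)).

Definition ypt := fun i => x i + h i.
Definition Tay (p : {mpoly K[N]}) :=
  p.@[ypt] - p.@[x] - \sum_(i < N) (mderiv i p).@[x] * h i.
Definition Q p := [/\ O p.@[x], (forall i, O (mderiv i p).@[x]) & I2 (Tay p)].

Lemma O_sum (I : Type) (r : seq I) (F : I -> K) :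
  (forall i, O (F i)) -> O (\sum_(i <- r) F i).
Proof. by move=> hF; apply: (big_ind O) => //; move=> ? ?; exact: OD. Qed.
Lemma I1_sum (I : Type) (r : seq I) (F : I -> K) :
  (forall i, I1 (F i)) -> I1 (\sum_(i <- r) F i).
Proof. by move=> hF; apply: (big_ind I1) => //; move=> ? ?; exact: I1D. Qed.
Lemma I2M' a b : I2 a -> O b -> I2 (a * b).
Proof. by move=> ha hb; rewrite mulrC; exact: I2M. Qed.
Lemma I1M' a b : I1 a -> O b -> I1 (a * b).
Proof. by move=> ha hb; rewrite mulrC; exact: I1M. Qed.

Lemma lin_I1 p : (forall i, O (mderiv i p).@[x]) ->
  I1 (\sum_(i < N) (mderiv i p).@[x] * h i).
Proof. by move=> hd; apply: I1_sum => i; exact: I1M. Qed.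

Lemma TayE p : p.@[ypt] = p.@[x] + \sum_(i < N) (mderiv i p).@[x] * h i + Tay p.
Proof. rewrite /Tay; ring. Qed.

Lemma Q_diff p : Q p -> I1 (p.@[ypt] - p.@[x]).
Proof.
case=> _ hd ht; rewrite TayE.
have -> : p.@[x] + \sum_(i < N) (mderiv i p).@[x] * h i + Tay p - p.@[x]
  = \sum_(i < N) (mderiv i p).@[x] * h i + Tay p by ring.
by apply: I1D; [exact: lin_I1|exact: I12].
Qed.
Lemma Q_y p : Q p -> O p.@[ypt].
Proof.
move=> hq; rewrite -(subrK p.@[x] p.@[ypt]) addrC.
have hd := Q_diff hq; case: hq => h1 _ _; apply: OD => //; exact: I1O.
Qed.

Lemma Q_add p q : Q p -> Q q -> Q (p + q).
Proof.
case=> p1 p2 p3 [q1 q2 q3]; split.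
- by rewrite mevalD; exact: OD.
- by move=> i; rewrite mderivD mevalD; exact: OD.
have -> : Tay (p + q) = Tay p + Tay q.
  rewrite /Tay !mevalD.
  have -> : \sum_(i < N) (mderiv i (p + q)).@[x] * h i =
     \sum_(i < N) (mderiv i p).@[x] * h i + \sum_(i < N) (mderiv i q).@[x] * h i.
    by rewrite -big_split; apply: eq_bigr => i _; rewrite mderivD mevalD mulrDl.
  ring.
exact: I2D.
Qed.

Lemma Q_mul p q : Q p -> Q q -> Q (p * q).
Proof.
move=> hp hq; have py := Q_y hp; have qy := Q_y hq.
case: hp => p1 p2 p3; case: hq => q1 q2 q3; split.
- by rewrite mevalM; exact: OM.
- by move=> i; rewrite mderivM mevalD !mevalM; apply: OD; apply: OM.
set A := \sum_(i < N) (mderiv i p).@[x] * h i.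
set B := \sum_(i < N) (mderiv i q).@[x] * h i.
have hA : I1 A by exact: lin_I1.
have hB : I1 B by exact: lin_I1.
have Ep : p.@[ypt] = p.@[x] + A + Tay p by exact: TayE.
have Eq : q.@[ypt] = q.@[x] + B + Tay q by exact: TayE.
have -> : Tay (p * q) = p.@[x] * Tay q + A * B + A * Tay q + Tay p * q.@[x]
     + Tay p * B + Tay p * Tay q.
  rewrite {1}/Tay !mevalM Ep Eq.
  have -> : \sum_(i < N) (mderiv i (p * q)).@[x] * h i = q.@[x] * A + p.@[x] * B.
    rewrite /A /B !mulr_sumr -big_split /=; apply: eq_bigr => i _.
    rewrite mderivM mevalD !mevalM; ring.
  ring.
exact (I2D (I2D (I2D (I2D (I2D (I2M p1 q3) (I11 hA hB)) (I11 hA (I12 q3))) (I2M' p3 q1)) (I11 (I12 p3) hB)) (I11 (I12 p3) (I12 q3))).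
Qed.

Lemma Q_C c : O c -> Q c%:MP.
Proof.
move=> hc; split.
- by rewrite mevalC.
- by move=> i; rewrite mderivC meval0.
have -> : Tay c%:MP = 0.
  rewrite /Tay !mevalC big1 ?subrr ?subr0 // => i _.
  by rewrite mderivC meval0 mul0r.
exact: I20.
Qed.

Lemma dX (z : 'I_N -> K) (i j : 'I_N) : (mderiv i 'X_j).@[z] = (j == i)%:R.
Proof.
rewrite mderivX mevalZ mevalX mnm1E.
case: (eqVneq j i) => [->|ne]; last by rewrite mul0r.
rewrite mul1r big1 // => k _.
by rewrite mnmBE subnn expr0.
Qed.

Lemma Q_X j : Q 'X_j.
Proof.
split.
- by rewrite mevalXU.
- by move=> i; rewrite dX; case: (j == i).
have -> : Tay 'X_j = 0.
  rewrite /Tay !mevalXU /ypt (bigD1 j) //= dX eqxx mul1r big1 ?addr0.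
    by ring.
  by move=> i ne; rewrite dX eq_sym (negbTE ne) mul0r.
exact: I20.
Qed.

Lemma Q_sum (I : Type) (r : seq I) (F : I -> {mpoly K[N]}) :
  (forall i, Q (F i)) -> Q (\sum_(i <- r) F i).
Proof.
move=> hF; apply: (big_ind Q) => //; last by move=> ? ?; exact: Q_add.
by rewrite -mpolyC0; exact: Q_C.
Qed.
Lemma Q_prod (I : Type) (r : seq I) (F : I -> {mpoly K[N]}) :
  (forall i, Q (F i)) -> Q (\prod_(i <- r) F i).
Proof.
move=> hF; apply: (big_ind Q) => //; last by move=> ? ?; exact: Q_mul.
by rewrite -mpolyC1; exact: Q_C.
Qed.
Lemma Q_exp p k : Q p -> Q (p ^+ k).
Proof.
move=> hp; elim: k => [|k ih]; first by rewrite expr0 -mpolyC1; exact: Q_C.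
by rewrite exprS; exact: Q_mul.
Qed.

Lemma Q_coef p : (forall m, O p@_m) -> Q p.
Proof.
move=> hc; rewrite (mpolyE p); apply: Q_sum => m.
rewrite -mul_mpolyC; apply: Q_mul; first exact: Q_C.
rewrite mpolyXE_id; apply: Q_prod => i; apply: Q_exp; exact: Q_X.
Qed.

End Taylor.

Section VD.
Variables (K : fieldType) (G : zmodType) (le : rel G) (v : K -> G) (D : K -> K).
Hypothesis hv : is_valuation le v.
Hypothesis hD : is_VD le v D.
Local Notation ge := (vge le v).
Local Notation gt := (vgt le v).
Let ho := hvO hv.

Lemma DD a b : D (a + b) = D a + D b. Proof. by case: hD => h _ _ _; exact: h. Qed.
Lemma D0 : D 0 = 0.
Proof. by apply: (addrI (D 0)); rewrite -DD !addr0. Qed.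
Lemma iterDD a b i : iter i D (a + b) = iter i D a + iter i D b.
Proof. by elim: i => [|i ih] //=; rewrite ih DD. Qed.
Lemma Dle a : vle le v a (D a). Proof. by case: hD => _ h _ _; exact: h. Qed.

Lemma Dge a g : ge a g -> ge (D a) g.
Proof.
case: (eqVneq a 0) => [->|na]; first by rewrite D0.
rewrite vgeE // => h; have := Dle a; rewrite /vle /vge => /orP[->//|/andP[_ h2]].
by rewrite (leT ho h h2) orbT.
Qed.
Lemma Dgt a g : gt a g -> gt (D a) g.
Proof.
case: (eqVneq a 0) => [->|na]; first by rewrite D0.
rewrite vgtE // => h; have := Dle a; rewrite /vle /vgt => /orP[->//|/andP[_ h2]].
by rewrite (lt_leT ho h h2) orbT.
Qed.
Lemma iter_ge a g i : ge a g -> ge (iter i D a) g.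
Proof. by move=> h; elim: i => [|i ih] //=; exact: Dge. Qed.
Lemma iter_gt a g i : gt a g -> gt (iter i D a) g.
Proof. by move=> h; elim: i => [|i ih] //=; exact: Dgt. Qed.

Lemma iter_tx t x : gt (D t) (v t) -> vring le v x ->
  forall i, gt (iter i D (t * x) - t * iter i D x) (v t).
Proof.
move=> hDt hx; case: hD => _ _ _ [e he hDM].
elim=> [|i ih]; first by rewrite /= subrr vgt0.
set y := iter i D x; set r := iter i D (t * x) - t * y.
have hy : ge y 0 by exact: iter_ge.
have -> : iter i.+1 D (t * x) = D (t * y + r) by rewrite /r addrC subrK.
rewrite DD hDM /=.
have -> : t * D y + y * D t + e * D t * D y + D r - t * D y
   = y * D t + e * D t * D y + D r by ring.
apply: (vgtD hv); last exact: Dgt.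
apply: (vgtD hv).
  by rewrite -(add0r (v t)); exact: (vgeM_gt hv).
rewrite -(addr0 (v t)); apply: (vgtM_ge hv); last exact: Dge.
by rewrite -(add0r (v t)); exact: (vgeM_gt hv).
Qed.

End VD.

Section Inst.
Variables (K : fieldType) (G : zmodType) (le : rel G) (v : K -> G).
Hypothesis hv : is_valuation le v.
Local Notation ge := (vge le v).
Local Notation gt := (vgt le v).
Let ho := hvO hv.

Lemma vring_ge x : vring le v x = ge x 0. Proof. by []. Qed.
Lemma ge1 : ge 1 0. Proof. by rewrite vgeE ?oner_eq0 // (v1 hv) leR. Qed.

Lemma QA N (x h : 'I_N -> K) g (le0g : le 0 g) (hx : forall i, ge (x i) 0)
  (hh : forall i, ge (h i) g) p (hp : forall m, ge p@_m 0) :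
  Q (fun a => ge a 0) (fun a => ge a (g + g)) x h p.
Proof.
apply: (@Q_coef K (fun a => ge a 0) (fun a => ge a g) (fun a => ge a (g + g))) => //.
- exact: vge0.
- exact: ge1.
- by move=> a b; exact: (vgeD hv).
- by move=> a b ha hb; rewrite -(addr0 0); exact: (vgeM hv).
- exact: vge0.
- by move=> a b; exact: (vgeD hv).
- by move=> a b ha hb; rewrite -(add0r g); exact: (vgeM hv).
- exact: vge0.
- by move=> a b; exact: (vgeD hv).
- by move=> a b ha hb; rewrite -(add0r (g + g)); exact: (vgeM hv).
- by move=> a; apply: (vge_le hv); exact (le0_double ho le0g).
- by move=> a; apply: (vge_le hv).
- by move=> a b; exact: (vgeM hv).
Qed.

Lemma QA_diff N (x h : 'I_N -> K) g (le0g : le 0 g)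
  (hh : forall i, ge (h i) g) p :
  Q (fun a => ge a 0) (fun a => ge a (g + g)) x h p ->
  ge (p.@[ypt x h] - p.@[x]) g.
Proof.
apply: (@Q_diff K (fun a => ge a 0) (fun a => ge a g) (fun a => ge a (g + g))) => //.
- exact: vge0.
- by move=> a b; exact: (vgeD hv).
- by move=> a b ha hb; rewrite -(add0r g); exact: (vgeM hv).
- by move=> a; apply: (vge_le hv); exact (le0_double ho le0g).
Qed.

Lemma QB N (x h : 'I_N -> K) g (le0g : le 0 g) (hx : forall i, ge (x i) 0)
  (hh : forall i, gt (h i) g) p (hp : forall m, ge p@_m 0) :
  Q (fun a => ge a 0) (fun a => gt a (g + g)) x h p.
Proof.
apply: (@Q_coef K (fun a => ge a 0) (fun a => gt a g) (fun a => gt a (g + g))) => //.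
- exact: vge0.
- exact: ge1.
- by move=> a b; exact: (vgeD hv).
- by move=> a b ha hb; rewrite -(addr0 0); exact: (vgeM hv).
- exact: vgt0.
- by move=> a b; exact: (vgtD hv).
- by move=> a b ha hb; rewrite -(add0r g); exact: (vgeM_gt hv).
- exact: vgt0.
- by move=> a b; exact: (vgtD hv).
- by move=> a b ha hb; rewrite -(add0r (g + g)); exact: (vgeM_gt hv).
- by move=> a; apply: (vgt_le hv); exact (le0_double ho le0g).
- by move=> a /vgt_ge; apply: (vge_le hv).
- by move=> a b; exact: (vgtM hv).
Qed.

Lemma QB_diff N (x h : 'I_N -> K) g (le0g : le 0 g)
  (hh : forall i, gt (h i) g) p :
  Q (fun a => ge a 0) (fun a => gt a (g + g)) x h p ->
  gt (p.@[ypt x h] - p.@[x]) g.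
Proof.
apply: (@Q_diff K (fun a => ge a 0) (fun a => gt a g) (fun a => gt a (g + g))) => //.
- exact: vgt0.
- by move=> a b; exact: (vgtD hv).
- by move=> a b ha hb; rewrite -(add0r g); exact: (vgeM_gt hv).
- by move=> a; apply: (vgt_le hv); exact (le0_double ho le0g).
Qed.

Lemma vge_muln a g k : ge a g -> ge (a *+ k) g.
Proof.
move=> h; elim: k => [|k ih]; first by rewrite mulr0n vge0.
by rewrite mulrS; exact: (vgeD hv).
Qed.

End Inst.

Section Main.
Variables (K : fieldType) (G : zmodType) (le : rel G) (v : K -> G) (D : K -> K).
Hypotheses (hv : is_valuation le v) (hD : is_VD le v D)
  (hsc : spherically_complete le v) (hres : residue_linearly_D_closed le v D).
Variables (n : nat) (f : {mpoly K[n.+1]}).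
Hypothesis hf : forall m, vring le v f@_m.
Variables (b : K) (gamma : G).
Hypothesis hb : vring le v b.
Hypothesis hgmin : forall i : 'I_n.+1, vge le v (mderiv i f).@[jet D n b] gamma.
Variable i0 : 'I_n.+1.
Hypotheses (hd0 : (mderiv i0 f).@[jet D n b] != 0)
  (hvd : v (mderiv i0 f).@[jet D n b] = gamma).
Hypothesis hfb : vgt le v f.@[jet D n b] (gamma + gamma).
Hypothesis Hno : ~ exists a : K, f.@[jet D n a] = 0 /\ vgt le v (a - b) gamma.

Local Notation ge := (vge le v).
Local Notation gt := (vgt le v).
Local Notation lt := (lt_ le).
Local Notation F c := (f.@[jet D n c]).
Local Notation d := ((mderiv i0 f).@[jet D n b]).
Let ho := hvO hv.

Lemma hdf i : forall m, ge (mderiv i f)@_m 0.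
Proof. by move=> m; rewrite mcoeff_deriv; apply: (vge_muln hv); exact: hf. Qed.

Lemma jet_ring c : ge c 0 -> forall i, ge (jet D n c i) 0.
Proof. by move=> h i; exact: (iter_ge hv hD). Qed.

Lemma jet_add a c : jet D n (a + c) =1 ypt (jet D n a) (jet D n c).
Proof. by move=> i; rewrite /jet /ypt (iterDD hD). Qed.

Lemma eval_ring (p : {mpoly K[n.+1]}) (x : 'I_n.+1 -> K) :
  (forall m, ge p@_m 0) -> (forall i, ge (x i) 0) -> ge p.@[x] 0.
Proof.
move=> hp hx.
have [] := QA hv (h := fun _ => 0) (leR ho 0) hx (fun _ => vge0 le v 0) hp.
by [].
Qed.

Lemma le0g : le 0 gamma.
Proof.
have := eval_ring (hdf i0) (jet_ring hb).
by rewrite vgeE // hvd.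
Qed.

Lemma cring c : gt (c - b) gamma -> ge c 0.
Proof.
move=> h; rewrite -(subrK b c); apply: (vgeD hv) => //.
exact: (vge_le hv le0g (vgt_ge h)).
Qed.

Lemma Fnz c : gt (c - b) gamma -> F c != 0.
Proof. by move=> h; apply/eqP => E; apply: Hno; exists c. Qed.

Lemma jet_split c a : jet D n c =1 ypt (jet D n a) (jet D n (c - a)).
Proof. by move=> i; rewrite -jet_add addrC subrK. Qed.

Lemma deriv_diff c (hc : gt (c - b) gamma) i :
  gt ((mderiv i f).@[jet D n c] - (mderiv i f).@[jet D n b]) gamma.
Proof.
have hh : forall j, gt (jet D n (c - b) j) gamma by move=> j; exact: (iter_gt hv hD).
have hQ := QB hv le0g (jet_ring hb) hh (hdf i).
have := QB_diff hv le0g hh hQ.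
by rewrite (meval_eq _ (jet_split c b)).
Qed.

Lemma deriv_ge c (hc : gt (c - b) gamma) i : ge ((mderiv i f).@[jet D n c]) gamma.
Proof.
rewrite -(subrK ((mderiv i f).@[jet D n b]) ((mderiv i f).@[jet D n c])).
apply: (vgeD hv); last exact: hgmin.
exact: vgt_ge (deriv_diff hc i).
Qed.

Lemma lt_sub a : lt (gamma + gamma) a -> lt gamma (a - gamma).
Proof. by move=> h; have := ltDr ho (- gamma) h; rewrite addrK. Qed.

Lemma chain_bound s z : gt (s - b) gamma -> lt (gamma + gamma) (v (F s)) ->
  ge (z - s) (v (F s) - gamma) -> gt (z - b) gamma /\ ge (F z) (v (F s)).
Proof.
move=> hs hF hz.
set gs := v (F s) - gamma.
have hlt : lt gamma gs by exact: lt_sub.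
have le0gs : le 0 gs by exact (leT ho le0g (lt_le hlt)).
split.
  have -> : z - b = (z - s) + (s - b) by rewrite addrA subrK.
  apply: (vgtD hv) => //; exact: (vge_lt hv hlt).
have hh : forall j, ge (jet D n (z - s) j) gs by move=> j; exact: (iter_ge hv hD).
have hQ := QA hv le0gs (jet_ring (cring hs)) hh hf.
rewrite (meval_eq _ (jet_split z s)) TayE.
have Es : v (F s) = gamma + gs by rewrite /gs addrC subrK.
apply: (vgeD hv); first apply: (vgeD hv).
- exact: (vge_v hv).
- apply: (vge_sum hv) => i; rewrite Es; apply: (vgeM hv); first exact: deriv_ge.
  exact: hh.
- case: hQ => _ _ hT; apply: (vge_le hv) hT.
  by rewrite Es; apply: (leDr ho); exact: lt_le.
Qed.


Lemma newton c : gt (c - b) gamma -> lt (gamma + gamma) (v (F c)) ->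
  exists c', [/\ gt (c' - b) gamma, lt (v (F c)) (v (F c')) &
                 ge (c' - c) (v (F c) - gamma)].
Proof.
move=> hc hF.
have nphi := Fnz hc.
set g := v (F c) - gamma.
have hlt : lt gamma g := lt_sub hF.
have le0g' : le 0 g by exact (leT ho le0g (lt_le hlt)).
have Eg : v (F c) = gamma + g by rewrite /g addrC subrK.
have [a na va] := vsurj hv g.
have [t [nt vt hlt_t]] : exists t : K, [/\ t != 0, v t = v a & vlt le v t (D t)].
  by case: hD => _ _ hV _; exact: hV.
have hDt : gt (D t) (v t) by move: hlt_t; rewrite /vlt /vgt => /andP[_ ->].
rewrite va in vt.
pose cc := fun i : 'I_n.+1 => (mderiv i f).@[jet D n c] / d.
have vdinv : v d^-1 = - gamma by rewrite (vV hv hd0) hvd.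
have hcc : forall i, vring le v (cc i).
  move=> i; rewrite vring_ge -(subrr gamma); apply: (vgeM hv); first exact: deriv_ge.
  rewrite -vdinv; exact: (vge_v hv).
have hcc0 : exists i, ~~ videal le v (cc i).
  exists i0; apply/negP => hI.
  set u := (mderiv i0 f).@[jet D n c] - d.
  have hu : gt (u / d) 0.
    rewrite -(subrr gamma); apply: (vgtM_ge hv); first exact: deriv_diff.
    rewrite -vdinv; exact: (vge_v hv).
  have E1 : 1 = cc i0 - u / d by rewrite /cc /u; field.
  have : gt 1 0 by rewrite E1; apply: (vgtB hv).
  by rewrite vgtE ?oner_eq0 // (v1 hv) lt_irr.
set y := - F c / (t * d).
have ntd : t * d != 0 by rewrite mulf_neq0.
have vtd : v (t * d) = v (F c) by rewrite (vM hv) // vt hvd /g subrK.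
have hy : vring le v y.
  rewrite vring_ge /y -(subrr (v (F c))); apply: (vgeM hv).
    by rewrite (vgeN hv); exact: (vge_v hv).
  by rewrite -vtd -(vV hv ntd); exact: (vge_v hv).
have [x0 hx0 hX] := hres hcc hcc0 hy.
exists (c + t * x0).
have Ec : c + t * x0 - c = t * x0 by rewrite addrAC subrr add0r.
have htx : ge (t * x0) g.
  by rewrite -(addr0 g) -vt; apply: (vgeM hv) => //; exact: (vge_v hv).
have hc'b : gt (c + t * x0 - b) gamma.
  have -> : c + t * x0 - b = t * x0 + (c - b) by rewrite addrAC addrC.
  by apply: (vgtD hv) => //; exact: (vge_lt hv hlt htx).
split => //; last by rewrite Ec.
have nF' := Fnz hc'b.
rewrite -vgtE //.
have hxj : forall i, ge (jet D n c i) 0 := jet_ring (cring hc).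
have hh : forall j, ge (jet D n (t * x0) j) g by move=> j; exact: (iter_ge hv hD).
have hQ := QA hv le0g' hxj hh hf.
rewrite (meval_eq _ (jet_split (c + t * x0) c)) Ec TayE.
set T := Tay _ _ f.
have hT : ge T (g + g) by case: hQ.
set S1 := \sum_(i < n.+1) cc i * iter i D x0.
pose r i := jet D n (t * x0) i - t * iter i D x0.
have hr : forall i, gt (r i) g by move=> i; rewrite -vt; exact: (iter_tx hv hD).
have Esum : \sum_(i < n.+1) (mderiv i f).@[jet D n c] * jet D n (t * x0) i
    = t * d * S1 + \sum_(i < n.+1) (mderiv i f).@[jet D n c] * r i.
  rewrite /S1 mulr_sumr -big_split /=; apply: eq_bigr => i _.
  by rewrite /r /cc; field.
have Eall : F c + \sum_(i < n.+1) (mderiv i f).@[jet D n c] * jet D n (t * x0) i + T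
   = t * d * (S1 - y) + \sum_(i < n.+1) (mderiv i f).@[jet D n c] * r i + T.
  by rewrite Esum /y; field; apply/andP; split.
rewrite Eall.
apply: (vgtD hv); first apply: (vgtD hv).
- rewrite -(addr0 (v (F c))) -vtd; apply: (vgeM_gt hv); first exact: (vge_v hv).
  exact: hX.
- apply: (vgt_sum hv) => i; rewrite Eg; apply: (vgeM_gt hv); first exact: deriv_ge.
  exact: hr.
- apply: (vge_lt hv) hT.
  by rewrite Eg; apply: (ltDr ho).
Qed.


Lemma main_false : False.
Proof.
pose S c := gt (c - b) gamma && lt (gamma + gamma) (v (F c)).
have Sb : S b.
  have hbb : gt (b - b) gamma by rewrite subrr vgt0.
  by rewrite /S hbb /= -vgtE //; exact: Fnz.
pose T := {c : K | S c}.
pose vF (s : T) := v (F (val s)).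
pose R := fun s t : T => le (vF s) (vF t) && ge (val t - val s) (vF s - gamma).
have Rrefl : forall s, R s s by move=> s; rewrite /R (leR ho) subrr vge0.
have Rtrans : forall r s t, R r s -> R s t -> R r t.
  move=> r s t /andP[h1 h2] /andP[h3 h4]; apply/andP; split; first exact (leT ho h1 h3).
  have -> : val t - val r = (val t - val s) + (val s - val r) by rewrite addrA subrK.
  apply: (vgeD hv) => //; apply: (vge_le hv) h4; exact: (leDr ho).
have Rchain : forall A : classical_sets.set T, classical_sets.total_on A (fun x y => R x y) ->
    exists t, forall s, A s -> R s t.
  move=> A hA; case: (classic (exists s0, A s0)) => [[s0 As0]|nA]; last first.
    by exists (exist _ b Sb) => s As; exfalso; apply: nA; exists s.
  pose I := {s : T | A s}.
  pose cI := fun i : I => val (proj1_sig i).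
  pose LI := fun i : I => (fun gg : G => le (vF (proj1_sig i) - gamma) gg) : pred G.
  have hfin : forall i, final_segment le (LI i).
    move=> i; split; first by exists (vF (proj1_sig i) - gamma); exact: (leR ho).
    by move=> g1 g2 h1 h2; exact (leT ho h1 h2).
  have ballE : forall (cc : K) r x, ball v cc (fun gg => le r gg) x = ge (x - cc) r.
    by move=> cc r x; rewrite /ball /vge subr_eq0.
  have nest : forall s t : T, R s t ->
      {subset ball v (val t) (fun gg => le (vF t - gamma) gg) <=
              ball v (val s) (fun gg => le (vF s - gamma) gg)}.
    move=> s t /andP[h1 h2] x; rewrite -!topredE /= !ballE => hx.
    have -> : x - val s = (x - val t) + (val t - val s) by rewrite addrA subrK.
    apply: (vgeD hv) => //; apply: (vge_le hv) hx; exact: (leDr ho).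
  have [z hz] : exists z, forall i, ball v (cI i) (LI i) z.
    apply: (hsc hfin) => i j.
    by case: (hA (proj1_sig i) (proj1_sig j) (proj2_sig i) (proj2_sig j)) => h; [right|left]; exact: nest.
  have hzs : forall s, A s -> ge (z - val s) (vF s - gamma).
    by move=> s As; rewrite -ballE; exact: (hz (exist _ s As)).
  have bnd : forall s, A s -> gt (z - b) gamma /\ ge (F z) (vF s).
    by move=> s As; case/andP: (valP s) => h1 h2; exact: chain_bound h1 h2 (hzs s As).
  have [hzb _] := bnd s0 As0.
  have nFz := Fnz hzb.
  have hle : forall s, A s -> le (vF s) (v (F z)).
    by move=> s As; have [_ h] := bnd s As; rewrite vgeE // in h.
  have Sz : S z.
    apply/andP; split => //; case/andP: (valP s0) => _ h2.
    exact (lt_leT ho h2 (hle s0 As0)).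
  by exists (exist _ z Sz) => s As; apply/andP; split; [exact: hle | exact: hzs].
have [m hm] := classical_sets.ZL_preorder (exist _ b Sb) Rrefl Rtrans Rchain.
case/andP: (valP m) => hmb hmF.
have [c' [hc'b hlt hge]] := newton hmb hmF.
have Sc' : S c' by apply/andP; split => //; exact (lt_leT ho hmF (lt_le hlt)).
have hR : R m (exist _ c' Sc') by apply/andP; split => //; exact: lt_le.
have /andP[h _] := hm _ hR.
exact: (le_lt_F ho h hlt).
Qed.

End Main.

Theorem theorem5 (K : fieldType) (G : zmodType) (le : rel G) (v : K -> G)
  (D : K -> K)
  (hv : is_valuation le v)
  (hD : is_VD le v D)
  (hsc : spherically_complete le v)
  (hres : residue_linearly_D_closed le v D)
  (n : nat) (f : {mpoly K[n.+1]})
  (hf : forall m, vring le v f@_m)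
  (b : K) (hb : vring le v b)
  (gamma : G)
  (hgmin : forall i : 'I_n.+1,
     vge le v (mderiv i f).@[jet D n b] gamma)
  (hgatt : exists i : 'I_n.+1,
     ((mderiv i f).@[jet D n b] != 0) /\ v (mderiv i f).@[jet D n b] = gamma)
  (hfb : vgt le v f.@[jet D n b] (gamma + gamma)) :
  exists a : K, f.@[jet D n a] = 0 /\ vgt le v (a - b) gamma.
Proof.
case: hgatt => i0 [hd0 hvd].
apply: NNPP => Hno.
exact: (main_false hv hD hsc hres hf hb hgmin hd0 hvd hfb Hno).
Qed.
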